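(* Let $G=(V,E)$ be an infinite, connected, locally finite graph satisfying $(\mathrm{SP}_{\alpha,c})$ for some $\alpha\ge0$ and $c>0$. Then there exists a constant $c_1=c_1(\alpha,c)>0$ such that \[\mathrm P_{\mu_D}(X_k\in D)\le\left[\max_{u,v\in D}\frac{\pi(u)}{\pi(v)}\right]^{1/2}\exp\left[-c_1\min\left\{\frac{k}{\log^\alpha|D|},\,k^{1/(1+\alpha)}\right\}\right]\] for every finite nonempty set $D\subset V$ and every $k\ge0$.
   Context: $\pi(v)=\deg(v)$, $\pi(A)=\sum_{v\in A}\pi(v)$. $P$ is the simple random walk transition matrix. For finite $A\subset V$, $P_A(u,v)=P(u,v)\mathbf 1(u,v\in A)$, $I_A(u,v)=\mathbf 1(u=v\in A)$, and $\lambda(A)$ is the smallest eigenvalue of $I_A-P_A^2$ (as a matrix on $A$). Spectral profile: $\Lambda(L)=\inf\{\lambda(B):B\subset V\text{ finite nonempty},\ \pi(B)\le L\}$ if $L\ge\min_v\pi(v)$, and $\Lambda(L)=1$ otherwise. $(\mathrm{SP}_{\alpha,c})$: $\Lambda(x)^{-1}\le\frac1c\log^\alpha\bigl[x/\max_v\pi(v)\bigr]$ for every $x\ge2\max_v\pi(v)$. $\mu_D$ is the uniform measure on $D$ and $\mathrm P_{\mu_D}$ the law of simple random walk $(X_k)$ started from $\mu_D$. Convention: $k/\log^\alpha|D|=+\infty$ when $|D|=1$, $\alpha>0$. *)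

(* Defs.v *)
From Stdlib Require Import Reals List Relations ClassicalDescription.
Import ListNotations.
Open Scope R_scope.

Record LFGraph (V : Type) := {
  nbrs : V -> list V;
  nbrs_nodup : forall u, NoDup (nbrs u);
  nbrs_sym : forall u v, In v (nbrs u) -> In u (nbrs v);
  nbrs_irrefl : forall u, ~ In u (nbrs u)
}.
Arguments nbrs {V} l u.

Definition adj {V} (G : LFGraph V) (u v : V) : Prop := In v (nbrs G u).

Definition graph_connected {V} (G : LFGraph V) : Prop :=
  forall u v : V, clos_refl_trans V (adj G) u v.

Definition infinite_type (V : Type) : Prop :=
  forall l : list V, exists v, ~ In v l.

Definition deg {V} (G : LFGraph V) (v : V) : nat := length (nbrs G v).
Definition piv {V} (G : LFGraph V) (v : V) : R := INR (deg G v).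

Definition sumR {T} (l : list T) (f : T -> R) : R :=
  fold_right (fun x acc => f x + acc) 0 l.

Definition piset {V} (G : LFGraph V) (A : list V) : R := sumR A (piv G).

Definition indic (P : Prop) : R :=
  if excluded_middle_informative P then 1 else 0.

Definition Pmat {V} (G : LFGraph V) (u v : V) : R :=
  indic (adj G u v) / piv G u.

Fixpoint Pk {V} (G : LFGraph V) (k : nat) (u v : V) : R :=
  match k with
  | O => indic (u = v)
  | S k' => sumR (nbrs G u) (fun w => / piv G u * Pk G k' w v)
  end.

(* mu is a (real) eigenvalue of I_A - P_A^2, viewed as a matrix on A *)
Definition is_eigval_IPA2 {V} (G : LFGraph V) (A : list V) (mu : R) : Prop :=
  exists f : V -> R,
    (exists v, In v A /\ f v <> 0) /\
    forall u, In u A ->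
      f u - sumR A (fun w => sumR A (fun x => Pmat G u x * Pmat G x w) * f w)
      = mu * f u.

Definition is_lambda {V} (G : LFGraph V) (A : list V) (l : R) : Prop :=
  is_eigval_IPA2 G A l /\ forall mu, is_eigval_IPA2 G A mu -> l <= mu.

Definition is_inf (E : R -> Prop) (m : R) : Prop :=
  (forall x, E x -> m <= x) /\ (forall b, (forall x, E x -> b <= x) -> b <= m).

Definition is_Lambda {V} (G : LFGraph V) (L Lam : R) : Prop :=
  ((forall v, L < piv G v) /\ Lam = 1) \/
  ((exists v, piv G v <= L) /\
   is_inf (fun l => exists B : list V, B <> [] /\ NoDup B /\ piset G B <= L
                                       /\ is_lambda G B l) Lam).

Definition is_max_pi {V} (G : LFGraph V) (M : R) : Prop :=
  (forall v, piv G v <= M) /\ (exists v, piv G v = M).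

(* (SP_{alpha,c}) : Lambda(x)^{-1} <= (1/c) log^alpha [x / max pi]
   for all x >= 2 max pi (Lambda(x) is required positive so that its
   inverse is a genuine real number). *)
Definition SP_cond {V} (G : LFGraph V) (alpha c : R) : Prop :=
  exists M, is_max_pi G M /\
    forall x Lam, 2 * M <= x -> is_Lambda G x Lam ->
      0 < Lam /\ / Lam <= / c * Rpower (ln (x / M)) alpha.

Definition prob_return {V} (G : LFGraph V) (D : list V) (k : nat) : R :=
  / INR (length D) * sumR D (fun u => sumR D (fun v => Pk G k u v)).

Definition max_ratio {V} (G : LFGraph V) (D : list V) : R :=
  fold_right Rmax 0 (map (fun p => piv G (fst p) / piv G (snd p)) (list_prod D D)).

(* k^beta for real beta > 0, with 0^beta = 0 *)
Definition kpow (k : nat) (beta : R) : R :=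
  match k with O => 0 | _ => Rpower (INR k) beta end.

(* min{ k / log^alpha |D|, k^{1/(1+alpha)} }, with k/log^alpha|D| = +infty
   when |D| = 1 *)
Definition rate (alpha : R) (n k : nat) : R :=
  if Nat.eq_dec n 1 then kpow k (/ (1 + alpha))
  else Rmin (INR k / Rpower (ln (INR n)) alpha) (kpow k (/ (1 + alpha))).

(* Main.v *)
Require Import Defs.
From Stdlib Require Import Reals List.
From Stdlib Require Import Lra Lia Permutation ClassicalDescription Classical Relations.
Import ListNotations.
Open Scope R_scope.

Ltac nz := repeat split; match goal with |- _ <> _ => apply Rgt_not_eq; lra | _ => lra end.

Lemma indic_true (P : Prop) : P -> indic P = 1.
Proof. intro H; unfold indic; destruct (excluded_middle_informative P); tauto. Qed.
Lemma indic_false (P : Prop) : ~ P -> indic P = 0.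
Proof. intro H; unfold indic; destruct (excluded_middle_informative P); tauto. Qed.
Lemma indic_01 (P : Prop) : indic P = 0 \/ indic P = 1.
Proof. unfold indic; destruct (excluded_middle_informative P); auto. Qed.
Lemma indic_nonneg (P : Prop) : 0 <= indic P.
Proof. destruct (indic_01 P) as [->| ->]; lra. Qed.
Lemma indic_le1 (P : Prop) : indic P <= 1.
Proof. destruct (indic_01 P) as [->| ->]; lra. Qed.

Definition edec {V : Type} (x y : V) : {x = y} + {x <> y} := excluded_middle_informative (x = y).

Lemma sumR_cons {T} (a : T) l f : sumR (a :: l) f = f a + sumR l f.
Proof. reflexivity. Qed.
Lemma sumR_nil {T} (f : T -> R) : sumR [] f = 0.
Proof. reflexivity. Qed.
Lemma sumR_app {T} (l1 l2 : list T) f : sumR (l1 ++ l2) f = sumR l1 f + sumR l2 f.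
Proof. induction l1; simpl; [lra|]. rewrite IHl1; lra. Qed.
Lemma sumR_ext {T} (l : list T) f g : (forall x, In x l -> f x = g x) -> sumR l f = sumR l g.
Proof. induction l; simpl; intros H; auto. rewrite H, IHl; auto. Qed.
Lemma sumR_le {T} (l : list T) f g : (forall x, In x l -> f x <= g x) -> sumR l f <= sumR l g.
Proof. induction l; simpl; intros H; [lra|]. specialize (IHl (fun x h => H x (or_intror h))). specialize (H a (or_introl eq_refl)). lra. Qed.
Lemma sumR_zero {T} (l : list T) : sumR l (fun _ => 0) = 0.
Proof. induction l; simpl; auto. rewrite IHl; lra. Qed.
Lemma sumR_nonneg {T} (l : list T) f : (forall x, In x l -> 0 <= f x) -> 0 <= sumR l f.
Proof. intro H. apply (sumR_le l (fun _ => 0) f) in H. rewrite sumR_zero in H; auto. Qed.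
Lemma sumR_plus {T} (l : list T) f g : sumR l (fun x => f x + g x) = sumR l f + sumR l g.
Proof. induction l; simpl; [lra|]. rewrite IHl; lra. Qed.
Lemma sumR_minus {T} (l : list T) f g : sumR l (fun x => f x - g x) = sumR l f - sumR l g.
Proof. induction l; simpl; [lra|]. rewrite IHl; lra. Qed.
Lemma sumR_scal {T} (l : list T) f c : sumR l (fun x => c * f x) = c * sumR l f.
Proof. induction l; simpl; [lra|]. rewrite IHl; lra. Qed.
Lemma sumR_scalr {T} (l : list T) f c : sumR l (fun x => f x * c) = sumR l f * c.
Proof. induction l; simpl; [lra|]. rewrite IHl; lra. Qed.
Lemma sumR_swap {T U} (l1 : list T) (l2 : list U) f :
  sumR l1 (fun x => sumR l2 (fun y => f x y)) = sumR l2 (fun y => sumR l1 (fun x => f x y)).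
Proof. induction l1; simpl. { symmetry; apply sumR_zero. }
  rewrite IHl1. rewrite <- sumR_plus. reflexivity. Qed.
Lemma sumR_perm {T} (l1 l2 : list T) f : Permutation l1 l2 -> sumR l1 f = sumR l2 f.
Proof. induction 1; simpl; lra. Qed.
Lemma sumR_filter_zero {T} (l : list T) (P : T -> bool) f :
  (forall x, In x l -> P x = false -> f x = 0) -> sumR l f = sumR (filter P l) f.
Proof. induction l; simpl; intros H; auto. destruct (P a) eqn:E; simpl.
  - rewrite IHl; auto.
  - rewrite H, IHl; auto; lra. Qed.
Lemma sumR_filter_le {T} (l : list T) (P : T -> bool) f :
  (forall x, In x l -> 0 <= f x) -> sumR (filter P l) f <= sumR l f.
Proof. induction l; simpl; intros H; [lra|]. specialize (IHl (fun x h => H x (or_intror h))).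
  specialize (H a (or_introl eq_refl)). destruct (P a); simpl; lra. Qed.

Lemma NoDup_remove' {V} (l : list V) a : NoDup l -> NoDup (remove edec a l).
Proof. induction l; simpl; intros H; auto. inversion H; subst.
  destruct (edec a a0); auto. constructor; auto. intro Hin. apply in_remove in Hin. tauto. Qed.

Lemma perm_remove {V} (l : list V) a : NoDup l -> In a l -> Permutation l (a :: remove edec a l).
Proof. induction l as [|b l IH]; simpl; intros H Hin; [tauto|]. inversion H; subst.
  destruct (edec a b) as [e|n].
  - subst. rewrite notin_remove; auto.
  - destruct Hin as [e|Hin]; [congruence|]. eapply perm_trans. apply perm_skip. apply IH; auto.
    apply perm_swap. Qed.

Lemma sumR_indic_eq {V} (l : list V) x g : NoDup l -> In x l ->
  sumR l (fun y => indic (x = y) * g y) = g x.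
Proof. induction l as [|a l IH]; simpl; intros H Hin; [tauto|]. inversion H; subst.
  destruct (edec x a) as [e|n].
  - subst. rewrite indic_true; auto. rewrite (sumR_ext _ _ (fun _ => 0)). rewrite sumR_zero; lra.
    intros y Hy. rewrite indic_false; [lra|]. intro; subst; tauto.
  - destruct Hin as [e|Hin]; [congruence|]. rewrite indic_false by auto. rewrite IH; auto; lra. Qed.

Lemma sumR_In_conv {V} (U l : list V) F : NoDup U -> NoDup l -> incl l U ->
  sumR U (fun y => indic (In y l) * F y) = sumR l F.
Proof. revert l. induction U as [|a U IH]; intros l HU Hl Hinc; simpl.
  - destruct l as [|b l]; simpl; auto. exfalso; apply (Hinc b); simpl; auto.
  - inversion HU; subst. destruct (classic (In a l)) as [Ha|Ha].
    + rewrite (sumR_perm l (a :: remove edec a l)) by (apply perm_remove; auto). simpl.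
      rewrite indic_true by auto.
      rewrite (sumR_ext U _ (fun y => indic (In y (remove edec a l)) * F y)).
      * rewrite IH; auto. lra. apply NoDup_remove'; auto.
        intros y Hy. apply in_remove in Hy. destruct Hy as [Hy Hne]. destruct (Hinc y Hy); [congruence|auto].
      * intros y Hy. f_equal. destruct (classic (In y l)).
        { rewrite !indic_true; auto. apply in_in_remove; auto. intro; subst; tauto. }
        { rewrite !indic_false; auto. intro H'; apply in_remove in H'; tauto. }
    + rewrite indic_false by auto. rewrite IH; auto. lra.
      intros y Hy. destruct (Hinc y Hy); auto. subst; tauto. Qed.

Lemma count_le {V} (U l : list V) : NoDup U -> sumR U (fun y => indic (In y l)) <= INR (length l).
Proof. revert l. induction U as [|a U IH]; intros l HU; simpl. { apply pos_INR. }
  inversion HU; subst. destruct (classic (In a l)) as [Ha|Ha].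
  - rewrite indic_true by auto.
    rewrite (sumR_ext U _ (fun y => indic (In y (remove edec a l)))).
    + specialize (IH (remove edec a l) H2). pose proof (remove_length_lt edec l a Ha).
      
      assert (INR (length (remove edec a l)) + 1 <= INR (length l)).
      { rewrite <- S_INR. apply le_INR. lia. } lra.
    + intros y Hy. destruct (classic (In y l)).
      { rewrite !indic_true; auto. apply in_in_remove; auto. intro; subst; tauto. }
      { rewrite !indic_false; auto. intro H'; apply in_remove in H'; tauto. }
  - rewrite indic_false by auto. specialize (IH l H2). lra. Qed.

Lemma sumR_subset_le {V} (U l : list V) F : NoDup U -> NoDup l -> incl l U ->
  (forall x, In x U -> 0 <= F x) -> sumR l F <= sumR U F.
Proof. intros. rewrite <- sumR_In_conv with (U := U); auto. apply sumR_le. intros x Hx.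
  specialize (H2 x Hx). pose proof (indic_le1 (In x l)). pose proof (indic_nonneg (In x l)). nra. Qed.

Lemma cauchy_schwarz {T} (l : list T) f g :
  (sumR l (fun x => f x * g x))^2 <= sumR l (fun x => f x ^ 2) * sumR l (fun x => g x ^ 2).
Proof.
  set (A := sumR l (fun x => f x ^ 2)). set (B := sumR l (fun x => f x * g x)).
  set (C := sumR l (fun x => g x ^ 2)).
  assert (Hq : forall t, 0 <= t^2 * A - 2 * t * B + C).
  { intro t. assert (E: t^2 * A - 2 * t * B + C = sumR l (fun x => (t * f x - g x)^2)).
    { unfold A, B, C. rewrite <- (sumR_scal l (fun x => f x ^2)), <- (sumR_scal l (fun x => f x * g x)).
      rewrite <- sumR_minus, <- sumR_plus. apply sumR_ext; intros; ring. }
    rewrite E. apply sumR_nonneg; intros; apply pow2_ge_0. }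
  assert (HA : 0 <= A) by (apply sumR_nonneg; intros; apply pow2_ge_0).
  destruct (Req_dec A 0) as [HA0|HA0].
  - assert (B = 0). { destruct (Req_dec B 0); auto. specialize (Hq ((C + 1) / (2 * B))).
      rewrite HA0 in Hq. replace (((C + 1) / (2 * B)) ^ 2 * 0 - 2 * ((C + 1) / (2 * B)) * B + C) with (-1) in Hq by (field; auto). lra. }
    rewrite H, HA0. lra.
  - specialize (Hq (B / A)). assert (0 < A) by lra.
    replace ((B/A)^2 * A - 2 * (B/A) * B + C) with ((A*C - B^2)/A) in Hq by (field; auto).
    apply Rmult_le_compat_r with (r := A) in Hq; [|lra]. unfold Rdiv in Hq.
    rewrite Rmult_assoc, Rinv_l, Rmult_1_r in Hq by lra. lra.
Qed.

Lemma Rdiv_le_0_compat' a b : 0 <= a -> 0 < b -> 0 <= a / b.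
Proof. intros. unfold Rdiv. apply Rmult_le_pos; auto. left; apply Rinv_0_lt_compat; auto. Qed.

Definition QF {V} (B : list V) (C : V -> V -> R) (f : V -> R) : R :=
  sumR B (fun x => sumR B (fun y => C x y * f x * f y)).
Definition sq {V} (B : list V) (f : V -> R) : R := sumR B (fun x => f x ^ 2).
Definition upd {V} (f : V -> R) (a : V) (t : R) : V -> R := fun x => if edec x a then t else f x.

Lemma upd_eq {V} (f : V -> R) a t : upd f a t a = t.
Proof. unfold upd; destruct (edec a a); congruence. Qed.
Lemma upd_neq {V} (f : V -> R) a t x : x <> a -> upd f a t x = f x.
Proof. unfold upd; destruct (edec x a); congruence. Qed.

Lemma sumR_upd {V} (B : list V) a (F : (V -> R) -> V -> R) f t :
  ~ In a B -> (forall g x, x <> a -> (forall y, y <> a -> g y = f y) -> F g x = F f x) ->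
  sumR B (F (upd f a t)) = sumR B (F f).
Proof. intros Ha HF. apply sumR_ext. intros x Hx. apply HF. intro; subst; tauto.
  intros y Hy. apply upd_neq; auto. Qed.

Lemma QF_upd {V} (B : list V) C f a t : ~ In a B -> QF B C (upd f a t) = QF B C f.
Proof. intro Ha. unfold QF. apply sumR_ext. intros x Hx. apply sumR_ext. intros y Hy.
  rewrite !upd_neq; auto; intro; subst; tauto. Qed.

Lemma lin_upd {V} (B : list V) (c : V -> R) f a t : ~ In a B ->
  sumR B (fun y => c y * upd f a t y) = sumR B (fun y => c y * f y).
Proof. intro Ha. apply sumR_ext. intros y Hy. rewrite upd_neq; auto; intro; subst; tauto. Qed.

Lemma QF_cons {V} (a : V) B C f : (forall x, In x B -> C x a = C a x) ->
  QF (a :: B) C f = C a a * f a ^ 2 + 2 * f a * sumR B (fun y => C a y * f y) + QF B C f.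
Proof. intro Hs. unfold QF. rewrite sumR_cons. rewrite !sumR_cons.
  rewrite (sumR_ext B (fun x => sumR (a :: B) (fun y => C x y * f x * f y))
     (fun x => C a x * f a * f x + sumR B (fun y => C x y * f x * f y))).
  2:{ intros x Hx. rewrite sumR_cons, Hs; auto. ring. }
  rewrite sumR_plus.
  assert (E1: sumR B (fun y => C a y * f a * f y) = f a * sumR B (fun y => C a y * f y)).
  { rewrite <- sumR_scal. apply sumR_ext; intros; ring. }
  rewrite E1. ring. Qed.

Lemma sq_cons {V} (a : V) B f : sq (a :: B) f = f a ^ 2 + sq B f.
Proof. reflexivity. Qed.

Lemma sq_nonneg {V} (B : list V) f : 0 <= sq B f.
Proof. apply sumR_nonneg; intros; apply pow2_ge_0. Qed.

Lemma QF_zero_fun {V} (B : list V) C f : (forall x, In x B -> f x = 0) -> QF B C f = 0.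
Proof. intro H. unfold QF. rewrite (sumR_ext B _ (fun _ => 0)). apply sumR_zero.
  intros x Hx. rewrite (sumR_ext B _ (fun _ => 0)). apply sumR_zero. intros y Hy. rewrite H; auto; ring. Qed.

Lemma psd_dichotomy {V} (B : list V) : NoDup B -> forall C,
  (forall x y, In x B -> In y B -> C x y = C y x) -> (forall f, 0 <= QF B C f) ->
  (exists g, (exists v, In v B /\ g v <> 0) /\ QF B C g = 0) \/
  (exists d, 0 < d /\ forall f, d * sq B f <= QF B C f).
Proof.
  induction B as [|a B IH]; intros HB C Hs Hpsd.
  { right. exists 1. split; [lra|]. intro f. unfold sq, QF; simpl; lra. }
  inversion HB as [|? ? Ha HB']; subst.
  assert (Hsa : forall x, In x B -> C x a = C a x) by (intros; apply Hs; simpl; auto).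
  set (e := upd (fun _ : V => 0) a 1).
  assert (He : forall x, In x B -> e x = 0) by (intros x Hx; unfold e; rewrite upd_neq; auto; intro; subst; tauto).
  assert (Hea : e a = 1) by (unfold e; apply upd_eq).
  assert (QFe : QF (a :: B) C e = C a a).
  { rewrite QF_cons by auto. rewrite Hea, QF_zero_fun by auto.
    rewrite (sumR_ext B _ (fun _ => 0)). rewrite sumR_zero. ring. intros x Hx; rewrite He; auto; ring. }
  assert (Caa_nn : 0 <= C a a) by (rewrite <- QFe; apply Hpsd).
  destruct (Req_dec (C a a) 0) as [Caa0|CaaNZ].
  { left. exists e. split. exists a. split; simpl; auto. rewrite Hea; lra. rewrite QFe; auto. }
  assert (Caa : 0 < C a a) by lra. clear CaaNZ Caa_nn.
  set (c := C a a).
  assert (Hcn : c <> 0) by (unfold c; lra).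
  assert (Hc0 : 0 < c) by (unfold c; lra).

  set (C' := fun x y => C x y - C x a * C a y / c).
  set (b := fun f : V -> R => sumR B (fun y => C a y * f y)).
  assert (HC' : forall f, QF B C' f = QF B C f - b f ^ 2 / c).
  { intro f. unfold QF, C'.
    rewrite (sumR_ext B _ (fun x => sumR B (fun y => C x y * f x * f y) - (C a x * f x / c) * b f)).
    2:{ intros x Hx. unfold b. rewrite <- sumR_scal, <- sumR_minus. apply sumR_ext. intros y Hy.
        rewrite Hsa; auto. field. exact Hcn. }
    rewrite sumR_minus, sumR_scalr.
    replace (sumR B (fun x => C a x * f x / c)) with (b f / c). field; exact Hcn.
    unfold b. unfold Rdiv. rewrite sumR_scalr. reflexivity. }
  assert (Hdec : forall f, QF (a :: B) C f = c * (f a + b f / c) ^ 2 + QF B C' f).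
  { intro f. rewrite QF_cons by auto. rewrite HC'. fold c. unfold b. field. exact Hcn. }
  assert (Hb_upd : forall f t, b (upd f a t) = b f) by (intros; unfold b; apply lin_upd; auto).
  assert (HC'_upd : forall f t, QF B C' (upd f a t) = QF B C' f) by (intros; apply QF_upd; auto).
  assert (Hpsd' : forall f, 0 <= QF B C' f).
  { intro f. specialize (Hpsd (upd f a (- b f / c))). rewrite Hdec, upd_eq, Hb_upd, HC'_upd in Hpsd.
    replace (- b f / c + b f / c) with 0 in Hpsd by (field; exact Hcn). lra. }
  assert (Hs' : forall x y, In x B -> In y B -> C' x y = C' y x).
  { intros x y Hx Hy. unfold C'. rewrite (Hs x y), (Hsa x), (Hsa y); simpl; auto. field. exact Hcn. }
  destruct (IH HB' C' Hs' Hpsd') as [[g [[v [Hv Hgv]] Hg0]] | [d' [Hd' Hd'f]]].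
  - left. exists (upd g a (- b g / c)). split.
    + exists v. split; simpl; auto. rewrite upd_neq; auto. intro; subst; tauto.
    + rewrite Hdec, upd_eq, Hb_upd, HC'_upd, Hg0. replace (- b g / c + b g / c) with 0 by (field; exact Hcn). ring.
  - right. set (K := sumR B (fun y => C a y ^ 2)).
    assert (HK : 0 <= K) by (apply sumR_nonneg; intros; apply pow2_ge_0).
    set (q := 2 * K / c ^ 2 + 1).
    assert (Hq : 0 < q). { unfold q. assert (0 < c^2) by (apply pow_lt; unfold c; lra).
      assert (0 <= 2 * K / c ^ 2) by (apply Rmult_le_pos; [lra| left; apply Rinv_0_lt_compat; lra]). lra. }
    exists (Rmin (c / 4) (d' / q)). split.
    { apply Rmin_pos; [lra|]. apply Rdiv_lt_0_compat; lra. }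
    intro f. rewrite Hdec, sq_cons.
    set (s := f a + b f / c). set (S := sq B f).
    assert (HS : 0 <= S) by apply sq_nonneg.
    assert (Hcs : b f ^ 2 <= K * S).
    { unfold b, K, S, sq. apply (cauchy_schwarz B (fun y => C a y) f). }
    assert (Hfa : f a ^ 2 <= 2 * s ^ 2 + 2 * K * S / c ^ 2).
    { assert (f a = s - b f / c) by (unfold s; ring). rewrite H.
      assert ((s - b f / c) ^ 2 <= 2 * s ^ 2 + 2 * (b f / c) ^ 2).
      { assert (0 <= (s + b f / c) ^ 2) by apply pow2_ge_0. nra. }
      assert ((b f / c) ^ 2 <= K * S / c ^ 2).
      { replace ((b f / c) ^ 2) with (b f ^ 2 / c ^ 2) by (field; exact Hcn).
        unfold Rdiv. apply Rmult_le_compat_r; auto. left; apply Rinv_0_lt_compat, pow_lt; lra. }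
      lra. }
    specialize (Hd'f f). fold S in Hd'f.
    set (d := Rmin (c / 4) (d' / q)).
    assert (Hd1 : d <= c / 4) by apply Rmin_l.
    assert (Hd2 : d <= d' / q) by apply Rmin_r.
    assert (Hd0 : 0 < d) by (apply Rmin_pos; [lra| apply Rdiv_lt_0_compat; lra]).
    assert (Hdq : d * q <= d').
    { apply Rmult_le_compat_r with (r := q) in Hd2; [|lra]. unfold Rdiv in Hd2.
      rewrite Rmult_assoc, Rinv_l, Rmult_1_r in Hd2 by lra. lra. }
    assert (E : d * (f a ^ 2 + S) <= d * (2 * s ^ 2 + q * S)).
    { apply Rmult_le_compat_l; [lra|]. unfold q.
      replace ((2 * K / c ^ 2 + 1) * S) with (2 * K * S / c ^ 2 + S) by (field; exact Hcn). lra. }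
    assert (0 <= s ^ 2) by apply pow2_ge_0.
    assert (d * (2 * s ^ 2) <= c * s ^ 2) by nra.
    nra.
Qed.

Definition Fform {V} (U : list V) (p : V -> R) (A : V -> V -> R) (g : V -> R) : R :=
  sumR U (fun x => p x * g x ^ 2) - QF U A g.

Lemma dir_identity {V} (U : list V) p A g : (forall x y, In x U -> In y U -> A x y = A y x) ->
  Fform U p A g = sumR U (fun x => (p x - sumR U (A x)) * g x ^ 2)
     + / 2 * sumR U (fun x => sumR U (fun y => A x y * (g x - g y) ^ 2)).
Proof. intro Hs. unfold Fform, QF.
  assert (E : sumR U (fun x => sumR U (fun y => A x y * (g x - g y) ^ 2)) =
     sumR U (fun x => sumR U (fun y => A x y * g x ^ 2)) + sumR U (fun x => sumR U (fun y => A x y * g y ^ 2))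
     - 2 * sumR U (fun x => sumR U (fun y => A x y * g x * g y))).
  { rewrite <- sumR_scal, <- sumR_plus, <- sumR_minus. apply sumR_ext; intros x Hx.
    rewrite <- sumR_scal, <- sumR_plus, <- sumR_minus. apply sumR_ext; intros y Hy. ring. }
  assert (E2 : sumR U (fun x => sumR U (fun y => A x y * g y ^ 2)) = sumR U (fun x => sumR U (fun y => A x y * g x ^ 2))).
  { rewrite sumR_swap. apply sumR_ext; intros x Hx. apply sumR_ext; intros y Hy. rewrite Hs; auto. }
  rewrite E, E2.
  assert (E3 : sumR U (fun x => (p x - sumR U (A x)) * g x ^ 2) = sumR U (fun x => p x * g x ^ 2) - sumR U (fun x => sumR U (fun y => A x y * g x ^ 2))).
  { rewrite <- sumR_minus. apply sumR_ext; intros x Hx. rewrite sumR_scalr. ring. }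
  rewrite E3. field. Qed.

Lemma dir_mono {V} (U : list V) p A g (phi : R -> R) :
  (forall x y, In x U -> In y U -> A x y = A y x) -> (forall x y, In x U -> In y U -> 0 <= A x y) ->
  (forall x, In x U -> sumR U (A x) <= p x) ->
  (forall a, phi a ^ 2 <= a ^ 2) -> (forall a b, (phi a - phi b) ^ 2 <= (a - b) ^ 2) ->
  Fform U p A (fun x => phi (g x)) <= Fform U p A g.
Proof. intros Hs Hp Hr H1 H2. rewrite !dir_identity by auto.
  apply Rplus_le_compat.
  - apply sumR_le; intros x Hx. apply Rmult_le_compat_l; [specialize (Hr x Hx); lra| apply H1].
  - apply Rmult_le_compat_l; [lra|]. apply sumR_le; intros x Hx. apply sumR_le; intros y Hy.
    apply Rmult_le_compat_l; auto. Qed.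

Lemma dir_nonneg {V} (U : list V) p A g :
  (forall x y, In x U -> In y U -> A x y = A y x) -> (forall x y, In x U -> In y U -> 0 <= A x y) ->
  (forall x, In x U -> sumR U (A x) <= p x) -> 0 <= Fform U p A g.
Proof. intros Hs Hp Hr. pose proof (dir_mono U p A g (fun _ => 0) Hs Hp Hr).
  assert (Fform U p A (fun _ => 0) = 0).
  { unfold Fform. rewrite QF_zero_fun by auto. rewrite (sumR_ext U _ (fun _ => 0)). rewrite sumR_zero; ring.
    intros; simpl; ring. }
  rewrite <- H0. apply H; intros; [ pose proof (pow2_ge_0 a) | pose proof (pow2_ge_0 (a - b)) ]; simpl in *; lra. Qed.

Lemma sumR_pos_one {T} (l : list T) f v : (forall x, In x l -> 0 <= f x) -> In v l -> 0 < f v -> 0 < sumR l f.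
Proof. induction l; simpl; intros H Hv Hf; [tauto|]. destruct Hv as [<-|Hv].
  - pose proof (sumR_nonneg l f (fun x h => H x (or_intror h))). lra.
  - pose proof (IHl (fun x h => H x (or_intror h)) Hv Hf). pose proof (H a (or_introl eq_refl)). lra. Qed.

Definition Iadj {V} (G : LFGraph V) (x y : V) : R := indic (adj G x y).

Lemma adj_sym {V} (G : LFGraph V) x y : adj G x y -> adj G y x.
Proof. unfold adj. apply nbrs_sym. Qed.

Lemma Iadj_sym {V} (G : LFGraph V) x y : Iadj G x y = Iadj G y x.
Proof. unfold Iadj. destruct (classic (adj G x y)).
  - rewrite !indic_true; auto. apply adj_sym; auto.
  - rewrite !indic_false; auto. intro; apply H, adj_sym; auto. Qed.

Lemma Iadj_nonneg {V} (G : LFGraph V) x y : 0 <= Iadj G x y.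
Proof. apply indic_nonneg. Qed.

Lemma row_Iadj {V} (G : LFGraph V) X z : NoDup X -> sumR X (fun y => Iadj G z y) <= piv G z.
Proof. intro H. unfold Iadj, adj, piv, deg. apply count_le; auto. Qed.

Definition AX {V} (G : LFGraph V) (X : list V) (x y : V) : R :=
  sumR X (fun z => Iadj G x z * Iadj G z y / piv G z).

Definition sqw {V} (G : LFGraph V) (X : list V) (f : V -> R) : R := sumR X (fun x => piv G x * f x ^ 2).
Definition Nform {V} (G : LFGraph V) (X : list V) (f : V -> R) : R := Fform X (piv G) (AX G X) f.


Lemma AX_sym {V} (G : LFGraph V) X x y : AX G X x y = AX G X y x.
Proof. unfold AX. apply sumR_ext; intros z Hz; cbv beta. rewrite (Iadj_sym G x z), (Iadj_sym G z y). rewrite (Rmult_comm (Iadj G z x)). reflexivity. Qed.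

Lemma AX_nonneg {V} (G : LFGraph V) X x y : (forall v, 0 < piv G v) -> 0 <= AX G X x y.
Proof. intro Hp. unfold AX. apply sumR_nonneg. intros z _. unfold Rdiv.
  apply Rmult_le_pos; [apply Rmult_le_pos; apply Iadj_nonneg|]. left; apply Rinv_0_lt_compat; auto. Qed.

Lemma AX_row {V} (G : LFGraph V) X x : (forall v, 0 < piv G v) -> NoDup X -> sumR X (AX G X x) <= piv G x.
Proof. intros Hp HX. unfold AX. rewrite sumR_swap.
  apply Rle_trans with (sumR X (fun z => Iadj G x z)); [|apply row_Iadj; auto].
  apply sumR_le. intros z Hz.
  rewrite (sumR_ext X _ (fun y => (Iadj G x z / piv G z) * Iadj G z y)).
  2:{ intros y _. unfold Rdiv. rewrite !Rmult_assoc. f_equal. apply Rmult_comm. }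
  rewrite sumR_scal. pose proof (row_Iadj G X z HX). pose proof (Hp z). pose proof (Iadj_nonneg G x z).
  apply Rle_trans with (Iadj G x z / piv G z * piv G z).
  - apply Rmult_le_compat_l; auto. unfold Rdiv; apply Rmult_le_pos; auto. left; apply Rinv_0_lt_compat; auto.
  - unfold Rdiv. rewrite Rmult_assoc, Rinv_l by lra. lra. Qed.

Lemma Nform_nonneg {V} (G : LFGraph V) X f : (forall v, 0 < piv G v) -> NoDup X -> 0 <= Nform G X f.
Proof. intros Hp HX. apply dir_nonneg.
  - intros; apply AX_sym. - intros; apply AX_nonneg; auto. - intros; apply AX_row; auto. Qed.

Lemma eig_sum {V} (G : LFGraph V) X u f : (forall v, 0 < piv G v) ->
  sumR X (fun w => sumR X (fun x => Pmat G u x * Pmat G x w) * f w) =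
  / piv G u * sumR X (fun w => AX G X u w * f w).
Proof. intro Hp. rewrite <- sumR_scal. apply sumR_ext. intros w _. unfold AX.
  rewrite <- Rmult_assoc. f_equal. rewrite <- sumR_scal. apply sumR_ext. intros x _.
  unfold Pmat, Iadj. pose proof (Hp u). pose proof (Hp x). field. split; lra. Qed.

Lemma sqw_nonneg {V} (G : LFGraph V) X f : (forall v, 0 < piv G v) -> 0 <= sqw G X f.
Proof. intro Hp. apply sumR_nonneg. intros x _. apply Rmult_le_pos; [left; auto| apply pow2_ge_0]. Qed.

Lemma eig_rayleigh {V} (G : LFGraph V) X mu : (forall v, 0 < piv G v) ->
  is_eigval_IPA2 G X mu -> exists f, 0 < sqw G X f /\ Nform G X f = mu * sqw G X f.
Proof. intros Hp [f [[v [Hv Hfv]] Heq]]. exists f. split.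
  - apply sumR_pos_one with v; auto. intros x _. apply Rmult_le_pos; [left; auto| apply pow2_ge_0].
    apply Rmult_lt_0_compat; auto. assert (f v * f v > 0) by (destruct (Rlt_dec 0 (f v)); [nra|]; assert (f v < 0) by lra; nra). simpl; lra.
  - unfold Nform, Fform, sqw, QF. rewrite <- sumR_scal, <- sumR_minus. apply sumR_ext. intros u Hu.
    specialize (Heq u Hu). rewrite eig_sum in Heq by auto.
    rewrite (sumR_ext X _ (fun y => f u * (AX G X u y * f y))) by (intros; ring).
    rewrite sumR_scal. pose proof (Hp u).
    set (s := sumR X (fun w => AX G X u w * f w)) in *.
    assert (s = piv G u * (f u - mu * f u)).
    { rewrite <- Heq. field. lra. }
    rewrite H0. ring. Qed.

Lemma QF_lin {V} (X : list V) C g w t : (forall x y, In x X -> In y X -> C x y = C y x) ->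
  QF X C (fun x => g x + t * w x) = QF X C g + 2 * t * sumR X (fun x => sumR X (fun y => C x y * g x * w y)) + t ^ 2 * QF X C w.
Proof. intro Hs. unfold QF.
  set (L := sumR X (fun x => sumR X (fun y => C x y * g x * w y))).
  assert (L' : sumR X (fun x => sumR X (fun y => C x y * w x * g y)) = L).
  { unfold L. rewrite sumR_swap. apply sumR_ext; intros x Hx; apply sumR_ext; intros y Hy. cbv beta. rewrite Hs; auto. ring. }
  assert (E : sumR X (fun x => sumR X (fun y => C x y * (g x + t * w x) * (g y + t * w y))) =
    sumR X (fun x => sumR X (fun y => C x y * g x * g y)) + t * L + t * sumR X (fun x => sumR X (fun y => C x y * w x * g y))
    + t ^ 2 * sumR X (fun x => sumR X (fun y => C x y * w x * w y))).
  { unfold L. rewrite <- !sumR_scal. rewrite <- !sumR_plus. apply sumR_ext; intros x Hx.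
    rewrite <- !sumR_scal. rewrite <- !sumR_plus. apply sumR_ext; intros y Hy. ring. }
  rewrite E, L'. ring. Qed.

Lemma null_lin {V} (X : list V) C g w : (forall x y, In x X -> In y X -> C x y = C y x) ->
  (forall f, 0 <= QF X C f) -> QF X C g = 0 -> sumR X (fun x => sumR X (fun y => C x y * g x * w y)) = 0.
Proof. intros Hs Hpsd H0. set (L := sumR X (fun x => sumR X (fun y => C x y * g x * w y))).
  set (Q := QF X C w). assert (HQ : 0 <= Q) by apply Hpsd.
  destruct (Req_dec L 0) as [|HL]; auto. exfalso.
  set (t := - L / (Q + 1)).
  pose proof (Hpsd (fun x => g x + t * w x)). rewrite QF_lin in H by auto. fold L Q in H. rewrite H0 in H.
  assert (0 < L * L) by (destruct (Rlt_dec 0 L); [nra|]; assert (L < 0) by lra; nra).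
  assert (E : 0 + 2 * t * L + t ^ 2 * Q = - L * L * (Q + 2) / (Q + 1) ^ 2) by (unfold t; field; lra).
  rewrite E in H. assert (0 < (Q + 1) ^ 2) by (apply pow_lt; lra).
  assert (0 < L * L * (Q + 2) / (Q + 1) ^ 2).
  { apply Rdiv_lt_0_compat; auto. nra. }
  lra. Qed.

Lemma sumR_single_le {V} (X : list V) F x : NoDup X -> In x X -> (forall y, In y X -> 0 <= F y) -> F x <= sumR X F.
Proof. intros HX Hx Hn. replace (F x) with (sumR [x] F) by (simpl; ring). apply sumR_subset_le; auto.
  constructor; auto; constructor. intros y [<-|[]]; auto. Qed.

Lemma exists_lambda {V} (G : LFGraph V) X : (forall v, 0 < piv G v) -> NoDup X -> X <> [] ->
  exists m, is_lambda G X m /\ 0 <= m /\ forall f, m * sqw G X f <= Nform G X f.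
Proof.
  intros Hp HX Hne.
  set (E := fun r => exists f, 0 < sqw G X f /\ r = Nform G X f / sqw G X f).
  assert (Hlow : forall r, E r -> 0 <= r).
  { intros r [f [Hf ->]]. unfold Rdiv; apply Rmult_le_pos; [apply Nform_nonneg; auto| left; apply Rinv_0_lt_compat; auto]. }
  destruct X as [|x0 X0]; [congruence|].
  assert (HE : exists r, E (- r)).
  { exists (- (Nform G (x0 :: X0) (fun y => indic (x0 = y)) / sqw G (x0 :: X0) (fun y => indic (x0 = y)))).
    rewrite Ropp_involutive. eexists; split; [|reflexivity]. apply sumR_pos_one with x0; simpl; auto.
    intros; apply Rmult_le_pos; [left; auto|apply pow2_ge_0]. rewrite indic_true; auto. pose proof (Hp x0); lra. }
  set (X := x0 :: X0) in *.
  destruct (completeness (fun r => E (- r))) as [m' [Hub Hlub]].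
  { exists 0. intros r Hr. apply Hlow in Hr. lra. }
  { auto. }
  set (m := - m').
  assert (Hm1 : forall r, E r -> m <= r).
  { intros r Hr. assert (E (- - r)) by (rewrite Ropp_involutive; auto). apply Hub in H. unfold m; lra. }
  assert (Hm2 : forall b, (forall r, E r -> b <= r) -> b <= m).
  { intros b Hb. assert (m' <= - b). { apply Hlub. intros r Hr. apply Hb in Hr. lra. } unfold m; lra. }
  assert (Hm0 : 0 <= m) by (apply Hm2; auto).
  assert (Hmf : forall f, m * sqw G X f <= Nform G X f).
  { intro f. destruct (sqw_nonneg G X f Hp) as [HW|HW].
    - assert (m <= Nform G X f / sqw G X f) by (apply Hm1; exists f; auto).
      apply Rmult_le_compat_r with (r := sqw G X f) in H; [|lra]. unfold Rdiv in H.
      rewrite Rmult_assoc, Rinv_l, Rmult_1_r in H by lra. lra.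
    - rewrite <- HW, Rmult_0_r. apply Nform_nonneg; auto. }
  exists m. split; [|split; auto].
  set (Cm := fun x y => indic (x = y) * (piv G x * (1 - m)) - AX G X x y).
  assert (HQ : forall f, QF X Cm f = Nform G X f - m * sqw G X f).
  { intro f. unfold QF, Cm, Nform, Fform, sqw. unfold QF.
    rewrite <- sumR_scal, <- !sumR_minus. apply sumR_ext. intros x Hx.
    rewrite (sumR_ext X _ (fun y => indic (x = y) * (piv G x * (1 - m) * f x * f y) - AX G X x y * f x * f y)) by (intros; ring).
    rewrite sumR_minus, sumR_indic_eq by auto. ring. }
  assert (Hs : forall x y, In x X -> In y X -> Cm x y = Cm y x).
  { intros x y _ _. unfold Cm. rewrite AX_sym. destruct (classic (x = y)).
    - subst; auto.
    - rewrite !indic_false; auto; ring || congruence. }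
  assert (Hpsd : forall f, 0 <= QF X Cm f) by (intro f; rewrite HQ; specialize (Hmf f); lra).
  assert (HXd : NoDup X) by auto.
  destruct (psd_dichotomy X HXd Cm Hs Hpsd) as [[g [[v [Hv Hgv]] Hg0]] | [d [Hd Hdf]]].
  - assert (Heig : is_eigval_IPA2 G X m).
    { exists g. split; [exists v; auto|]. intros u Hu.
      pose proof (null_lin X Cm g (fun y => indic (u = y)) Hs Hpsd Hg0) as HL.
      rewrite (sumR_ext X _ (fun x => Cm u x * g x)) in HL.
      2:{ intros x Hx. rewrite (sumR_ext X _ (fun y => indic (u = y) * (Cm x y * g x))) by (intros; ring).
          rewrite sumR_indic_eq by auto. rewrite Hs; auto. }
      unfold Cm in HL. rewrite (sumR_ext X _ (fun x => indic (u = x) * (piv G u * (1 - m) * g x) - AX G X u x * g x)) in HL by (intros; ring).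
      rewrite sumR_minus, sumR_indic_eq in HL by auto.
      rewrite eig_sum by auto. pose proof (Hp u).
      assert (sumR X (fun w => AX G X u w * g w) = piv G u * (1 - m) * g u) by lra.
      rewrite H0. field. lra. }
    split; auto. intros mu Hmu. destruct (eig_rayleigh G X mu Hp Hmu) as [f [Hf Hfe]].
    apply Hm1. exists f. split; auto. rewrite Hfe. field. lra.
  - exfalso.
    set (P := sumR X (piv G)).
    assert (HP : 0 < P) by (apply sumR_pos_one with x0; simpl; auto; intros; left; auto).
    assert (Hb : forall r, E r -> m + d / P <= r).
    { intros r [f [Hf ->]]. specialize (Hdf f). rewrite HQ in Hdf.
      assert (HWP : sqw G X f <= P * sq X f).
      { unfold sqw, sq. rewrite <- sumR_scal. apply sumR_le. intros x Hx. apply Rmult_le_compat_r; [apply pow2_ge_0|].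
        apply sumR_single_le; auto. intros; left; auto. }
      assert (d / P * sqw G X f <= d * sq X f).
      { apply Rmult_le_compat_l with (r := d / P) in HWP; [|left; apply Rdiv_lt_0_compat; auto].
        replace (d / P * (P * sq X f)) with (d * sq X f) in HWP by (field; lra). auto. }
      apply Rmult_le_reg_r with (sqw G X f); auto. unfold Rdiv at 2.
      rewrite Rmult_assoc, Rinv_l, Rmult_1_r by lra. lra. }
    apply Hm2 in Hb. assert (0 < d / P) by (apply Rdiv_lt_0_compat; auto). lra.
Qed.

Definition PU {V} (G : LFGraph V) (U : list V) (f : V -> R) (z : V) : R :=
  sumR U (fun w => Pmat G z w * f w).

Lemma piPmat {V} (G : LFGraph V) z w : (forall v, 0 < piv G v) -> piv G z * Pmat G z w = Iadj G z w.
Proof. intro Hp. unfold Pmat, Iadj. pose proof (Hp z). field. lra. Qed.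

Lemma PU_nonneg {V} (G : LFGraph V) U f z : (forall v, 0 < piv G v) -> (forall x, In x U -> 0 <= f x) -> 0 <= PU G U f z.
Proof. intros Hp Hf. apply sumR_nonneg. intros w Hw. apply Rmult_le_pos; auto.
  unfold Pmat. unfold Rdiv. apply Rmult_le_pos; [apply indic_nonneg| left; apply Rinv_0_lt_compat; auto]. Qed.

Lemma L1_contract {V} (G : LFGraph V) U f : (forall v, 0 < piv G v) -> NoDup U -> (forall x, In x U -> 0 <= f x) ->
  sumR U (fun z => piv G z * PU G U f z) <= sumR U (fun w => piv G w * f w).
Proof. intros Hp HU Hf. unfold PU.
  rewrite (sumR_ext U _ (fun z => sumR U (fun w => Iadj G w z * f w))).
  2:{ intros z Hz. rewrite <- sumR_scal. apply sumR_ext. intros w Hw. rewrite <- Rmult_assoc, piPmat by auto. rewrite Iadj_sym. reflexivity. }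
  rewrite sumR_swap. apply sumR_le. intros w Hw. rewrite sumR_scalr.
  apply Rmult_le_compat_r; auto. apply row_Iadj; auto. Qed.

Lemma sq_PU {V} (G : LFGraph V) U f : (forall v, 0 < piv G v) ->
  sqw G U (PU G U f) = QF U (AX G U) f.
Proof. intro Hp. unfold sqw, QF, PU, AX.
  transitivity (sumR U (fun z => / piv G z * (sumR U (fun x => Iadj G z x * f x) * sumR U (fun y => Iadj G z y * f y)))).
  - apply sumR_ext. intros z Hz. pose proof (Hp z).
    rewrite (sumR_ext U _ (fun w => / piv G z * (Iadj G z w * f w))).
    2:{ intros w _. unfold Pmat, Iadj. field. lra. }
    rewrite sumR_scal. field. lra.
  - symmetry. 
    rewrite (sumR_ext U _ (fun x => sumR U (fun z => sumR U (fun y => / piv G z * ((Iadj G z x * f x) * (Iadj G z y * f y)))))).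
    2:{ intros x Hx. rewrite sumR_swap. apply sumR_ext. intros y Hy. rewrite <- sumR_scalr, <- sumR_scalr. apply sumR_ext. intros z Hz.
        rewrite (Iadj_sym G x z). pose proof (Hp z). field. lra. }
    rewrite sumR_swap. apply sumR_ext. intros z Hz.
    transitivity (/ piv G z * sumR U (fun x => (Iadj G z x * f x) * sumR U (fun y => Iadj G z y * f y))).
    + rewrite <- sumR_scal. apply sumR_ext; intros x _. rewrite <- sumR_scal, <- sumR_scal. apply sumR_ext; intros; ring.
    + f_equal. apply sumR_scalr.
Qed.

Lemma ln_le_sub1 x : 0 < x -> ln x <= x - 1.
Proof. intro H. pose proof (exp_ineq1_le (ln x)). rewrite exp_ln in H0; auto. lra. Qed.

Lemma ln_le_mono x y : 0 < x -> x <= y -> ln x <= ln y.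
Proof. intros H1 H2. destruct H2 as [H2|<-]; [left; apply ln_increasing; auto| lra]. Qed.

Lemma ln_pos' x : 1 < x -> 0 < ln x.
Proof. intro H. rewrite <- ln_1. apply ln_increasing; lra. Qed.

Lemma ln_nonneg' x : 1 <= x -> 0 <= ln x.
Proof. intro H. rewrite <- ln_1. apply ln_le_mono; lra. Qed.

Lemma Rpower_ge1 x a : 1 <= x -> 0 <= a -> 1 <= Rpower x a.
Proof. intros H1 H2. unfold Rpower. rewrite <- exp_0. 
  destruct (Rle_lt_or_eq_dec 0 (a * ln x)) as [H|H].
  - apply Rmult_le_pos; auto. apply ln_nonneg'; auto.
  - left; apply exp_increasing; auto.
  - rewrite H; lra. Qed.

Lemma Rpower_pos x a : 0 < Rpower x a.
Proof. unfold Rpower; apply exp_pos. Qed.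

Lemma ln_Rpower' x a : 0 < x -> ln (Rpower x a) = a * ln x.
Proof. intro H. unfold Rpower. apply ln_exp. Qed.

Definition Kc (alpha c : R) : R := 2 * (1 + alpha + ln (1 + 2 / c) + alpha * ln (2 * alpha + 2)).

Lemma Kc_ge (alpha c : R) : 0 <= alpha -> 0 < c -> 2 + 2 * alpha <= Kc alpha c.
Proof. intros Ha Hc. unfold Kc.
  assert (0 <= ln (1 + 2 / c)) by (apply ln_nonneg'; assert (0 < 2 / c) by (apply Rdiv_lt_0_compat; lra); lra).
  assert (0 <= ln (2 * alpha + 2)) by (apply ln_nonneg'; lra).
  assert (0 <= alpha * ln (2 * alpha + 2)) by (apply Rmult_le_pos; auto). lra. Qed.

Lemma K_lemma (alpha c L : R) : 0 <= alpha -> 0 < c -> 1 <= L ->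
  L + ln (1 + 2 * Rpower (Kc alpha c * L) alpha / c) <= Kc alpha c * L.
Proof. intros Ha Hc HL. pose proof (Kc_ge alpha c Ha Hc) as HK. set (K := Kc alpha c) in *.
  assert (HKL : 1 <= K * L) by nra.
  set (P := Rpower (K * L) alpha).
  assert (HP : 1 <= P) by (apply Rpower_ge1; auto).
  assert (H2c : 0 < 2 / c) by (apply Rdiv_lt_0_compat; lra).
  assert (E1 : ln (1 + 2 * P / c) <= ln (1 + 2 / c) + ln P).
  { rewrite <- ln_mult by lra. apply ln_le_mono. assert (0 <= 2 * P / c) by (apply Rdiv_le_0_compat'; lra). lra.
    replace (2 * P / c) with (2 / c * P) by (field; lra). nra. }
  assert (E2 : ln P = alpha * (ln K + ln L)).
  { unfold P. rewrite ln_Rpower' by lra. rewrite ln_mult by lra. ring. }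
  assert (E3 : ln L <= L - 1) by (apply ln_le_sub1; lra).
  assert (E4 : ln K <= ln (2 * alpha + 2) + K / (2 * alpha + 2) - 1).
  { replace K with ((2 * alpha + 2) * (K / (2 * alpha + 2))) at 1 by (field; lra).
    rewrite ln_mult. pose proof (ln_le_sub1 (K / (2 * alpha + 2))). 
    assert (0 < K / (2 * alpha + 2)) by (apply Rdiv_lt_0_compat; lra). specialize (H H0). lra. lra.
    apply Rdiv_lt_0_compat; lra. }
  assert (E5 : alpha * (K / (2 * alpha + 2)) <= K / 2).
  { replace (alpha * (K / (2 * alpha + 2))) with (K / 2 * (2 * alpha / (2 * alpha + 2))) by (field; lra).
    assert (2 * alpha / (2 * alpha + 2) <= 1). { apply Rmult_le_reg_r with (2 * alpha + 2); [lra|].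
      unfold Rdiv. rewrite Rmult_assoc, Rinv_l by lra. lra. }
    assert (0 <= 2 * alpha / (2 * alpha + 2)) by (apply Rdiv_le_0_compat'; lra). nra. }
  assert (E6 : alpha * ln K <= alpha * ln (2 * alpha + 2) + K / 2 - alpha).
  { assert (alpha * ln K <= alpha * (ln (2 * alpha + 2) + K / (2 * alpha + 2) - 1)) by (apply Rmult_le_compat_l; auto).
    lra. }
  assert (E7 : alpha * ln L <= alpha * (L - 1)) by (apply Rmult_le_compat_l; auto).
  assert (HKdef : K = 2 * (1 + alpha + ln (1 + 2 / c) + alpha * ln (2 * alpha + 2))) by reflexivity.
  assert (E8 : (K - 1 - alpha) * 1 <= (K - 1 - alpha) * L) by (apply Rmult_le_compat_l; lra).
  rewrite E2 in E1. lra. Qed.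


Lemma sumR_split_filter {T} (l : list T) (p : T -> bool) f :
  sumR l f = sumR (filter p l) f + sumR (filter (fun x => negb (p x)) l) f.
Proof. induction l; simpl; [lra|]. destruct (p a); simpl; rewrite IHl; lra. Qed.

Lemma ln_ge1_4 x : 4 <= x -> 1 <= ln x.
Proof. intro H. rewrite <- (ln_exp 1). apply ln_le_mono. apply exp_pos. pose proof exp_le_3; lra. Qed.

Lemma trunc_sq s a : 0 <= s -> Rmax (a - s) 0 ^ 2 <= a ^ 2.
Proof. intro Hs. unfold Rmax. destruct (Rle_dec (a - s) 0); simpl.
  - pose proof (Rle_0_sqr a). unfold Rsqr in H. lra.
  - assert (0 <= s * (2 * a - s)) by (apply Rmult_le_pos; lra). nra. Qed.

Lemma trunc_lip s a b : (Rmax (a - s) 0 - Rmax (b - s) 0) ^ 2 <= (a - b) ^ 2.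
Proof. unfold Rmax. pose proof (Rle_0_sqr (a - b)). unfold Rsqr in H.
  destruct (Rle_dec (a - s) 0); destruct (Rle_dec (b - s) 0); simpl.
  - lra.
  - assert (0 <= (b - s) * (s - a)) by (apply Rmult_le_pos; lra).
    assert (0 <= (b - s) * (b - s)) by (apply Rmult_le_pos; lra). nra.
  - assert (0 <= (a - s) * (s - b)) by (apply Rmult_le_pos; lra).
    assert (0 <= (a - s) * (a - s)) by (apply Rmult_le_pos; lra). nra.
  - lra. Qed.

Lemma Nform_PU {V} (G : LFGraph V) U f : (forall v, 0 < piv G v) ->
  Nform G U f = sqw G U f - sqw G U (PU G U f).
Proof. intro Hp. unfold Nform, Fform. rewrite sq_PU by auto. reflexivity. Qed.

Lemma step_decay {V} (G : LFGraph V) (U : list V) (alpha c M S n : R) (g : V -> R) :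
  0 <= alpha -> 0 < c -> (forall v, 0 < piv G v) -> NoDup U -> 0 < M -> (forall v, piv G v <= M) ->
  (forall x Y, 2 * M <= x -> ln (x / M) <= Y -> exists Lam, c / Rpower Y alpha <= Lam /\
       forall B m, B <> [] -> NoDup B -> piset G B <= x -> is_lambda G B m -> Lam <= m) ->
  (forall x, In x U -> 0 <= g x) -> sumR U (fun x => piv G x * g x) <= S ->
  1 <= n -> S <= n * M -> 0 < sqw G U g -> sqw G U g <= S ->
  sqw G U (PU G U g) <= sqw G U g * (1 - 3 * (c / (8 * Rpower (Kc alpha c * ln (4 * n * S / sqw G U g)) alpha))).
Proof.
  intros Ha Hc Hp HU HM HpM HLam Hg HgS Hn HSn HE HES.
  set (E := sqw G U g) in *.
  assert (HS : 0 < S) by lra.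
  set (L0 := ln (4 * n * S / E)).
  assert (HX0 : 4 <= 4 * n * S / E).
  { apply Rmult_le_reg_r with E; auto. unfold Rdiv. rewrite Rmult_assoc, Rinv_l, Rmult_1_r by lra. nra. }
  assert (HL0 : 1 <= L0) by (apply ln_ge1_4; auto).
  pose proof (Kc_ge alpha c Ha Hc) as HK. set (K := Kc alpha c) in *.
  set (R0 := Rpower (K * L0) alpha).
  assert (HR0 : 1 <= R0) by (apply Rpower_ge1; nra).
  set (th := c / (8 * R0)).
  assert (Hth : 0 < th) by (apply Rdiv_lt_0_compat; lra).
  set (s := E / (4 * S)). assert (Hs : 0 < s) by (apply Rdiv_lt_0_compat; lra).
  set (t := th * E / S). assert (Ht : 0 < t) by (apply Rdiv_lt_0_compat; nra).
  set (h := fun x => Rmax (g x - s) 0).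
  assert (Hh0 : forall x, 0 <= h x) by (intro x; unfold h; apply Rmax_r).
  assert (Hhg : forall x, In x U -> h x <= g x).
  { intros x Hx. unfold h. specialize (Hg x Hx). apply Rmax_lub; lra. }
  set (Ph := PU G U h).
  assert (HPh0 : forall z, 0 <= Ph z) by (intro z; apply PU_nonneg; auto).
  assert (Hmono : Nform G U h <= Nform G U g).
  { unfold Nform. apply (dir_mono U (piv G) (AX G U) g (fun a => Rmax (a - s) 0)).
    - intros; apply AX_sym. - intros; apply AX_nonneg; auto. - intros; apply AX_row; auto.
    - intro a; apply trunc_sq; lra. - intros a b; apply trunc_lip. }
  rewrite !Nform_PU in Hmono by auto. fold E Ph in Hmono.
  assert (Hsqh : E / 2 <= sqw G U h).
  { assert (sumR U (fun x => piv G x * (g x ^ 2 - 2 * s * g x)) <= sqw G U h).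
    { apply sumR_le. intros x Hx. apply Rmult_le_compat_l; [left; auto|]. unfold h. specialize (Hg x Hx).
      unfold Rmax. destruct (Rle_dec (g x - s) 0); simpl; nra. }
    rewrite (sumR_ext U _ (fun x => piv G x * g x ^ 2 - (2 * s) * (piv G x * g x))) in H by (intros; ring).
    rewrite sumR_minus, sumR_scal in H. change (sumR U (fun x => piv G x * g x ^ 2)) with E in H.
    assert (2 * s * sumR U (fun x => piv G x * g x) <= 2 * s * S) by (apply Rmult_le_compat_l; lra).
    assert (2 * s * S = E / 2) by (unfold s; field; nz). lra. }
  set (p := fun z => if Rlt_dec 0 (h z) then true else if Rlt_dec t (Ph z) then true else false).
  set (B := filter p U).
  assert (HBd : NoDup B) by (apply NoDup_filter; auto).
  assert (HBU : incl B U) by (intros z Hz; apply filter_In in Hz; tauto).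
  assert (Hhz : forall x, In x U -> p x = false -> h x = 0).
  { intros x Hx Hpx. unfold p in Hpx. destruct (Rlt_dec 0 (h x)); [discriminate|]. specialize (Hh0 x). lra. }
  assert (HPhB : forall z, Ph z = PU G B h z).
  { intro z. unfold Ph, PU, B. apply sumR_filter_zero. intros x Hx Hpx. rewrite Hhz; auto; ring. }
  assert (HsqB : sqw G B h = sqw G U h).
  { unfold sqw, B. symmetry. apply sumR_filter_zero. intros x Hx Hpx. rewrite Hhz; auto; simpl; ring. }
  assert (Hsplit : sqw G U Ph = sumR B (fun z => piv G z * Ph z ^ 2) +
                   sumR (filter (fun x => negb (p x)) U) (fun z => piv G z * Ph z ^ 2)).
  { unfold sqw. apply sumR_split_filter. }
  assert (Hin : sumR B (fun z => piv G z * Ph z ^ 2) = QF B (AX G B) h).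
  { rewrite <- sq_PU by auto. unfold sqw. apply sumR_ext. intros z _. rewrite HPhB. reflexivity. }
  assert (Hout : sumR (filter (fun x => negb (p x)) U) (fun z => piv G z * Ph z ^ 2) <= t * S).
  { apply Rle_trans with (t * sumR (filter (fun x => negb (p x)) U) (fun z => piv G z * Ph z)).
    { rewrite <- sumR_scal. apply sumR_le. intros z Hz. apply filter_In in Hz. destruct Hz as [Hz Hpz].
      assert (Ph z <= t). { unfold p in Hpz. destruct (Rlt_dec 0 (h z)); [discriminate|].
        destruct (Rlt_dec t (Ph z)); [discriminate|]. lra. }
      pose proof (Hp z). pose proof (HPh0 z). assert (0 <= piv G z * Ph z * (t - Ph z)) by (apply Rmult_le_pos; [apply Rmult_le_pos|]; lra). simpl. nra. }
    apply Rmult_le_compat_l; [lra|].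
    apply Rle_trans with (sumR U (fun z => piv G z * Ph z)).
    { apply sumR_filter_le. intros; apply Rmult_le_pos; [left; auto| auto]. }
    apply Rle_trans with (sumR U (fun z => piv G z * h z)).
    { apply L1_contract; auto. }
    apply Rle_trans with (sumR U (fun z => piv G z * g z)); auto.
    apply sumR_le. intros x Hx. apply Rmult_le_compat_l; [left; auto|auto]. }
  assert (HpiB : piset G B <= S / s + S / t).
  { unfold piset. apply Rle_trans with (sumR B (fun z => piv G z * g z / s + piv G z * Ph z / t)).
    { apply sumR_le. intros z Hz. apply filter_In in Hz. destruct Hz as [Hz Hpz]. unfold p in Hpz.
      pose proof (Hp z). pose proof (HPh0 z). pose proof (Hg z Hz).
      assert (0 <= piv G z * g z / s) by (apply Rdiv_le_0_compat'; [nra|lra]).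
      assert (0 <= piv G z * Ph z / t) by (apply Rdiv_le_0_compat'; [nra|lra]).
      destruct (Rlt_dec 0 (h z)) as [Hhz'|].
      - assert (s < g z). { unfold h, Rmax in Hhz'. destruct (Rle_dec (g z - s) 0); lra. }
        assert (piv G z <= piv G z * g z / s). { apply Rmult_le_reg_r with s; auto. unfold Rdiv.
          rewrite Rmult_assoc, Rinv_l, Rmult_1_r by lra. nra. } lra.
      - destruct (Rlt_dec t (Ph z)); [|discriminate].
        assert (piv G z <= piv G z * Ph z / t). { apply Rmult_le_reg_r with t; auto. unfold Rdiv.
          rewrite Rmult_assoc, Rinv_l, Rmult_1_r by lra. nra. } lra. }
    rewrite sumR_plus. unfold Rdiv. rewrite !sumR_scalr.
    apply Rplus_le_compat; apply Rmult_le_compat_r.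
    - left; apply Rinv_0_lt_compat; auto.
    - apply Rle_trans with (sumR U (fun z => piv G z * g z)); auto. apply sumR_filter_le. intros; apply Rmult_le_pos; [left; auto|auto].
    - left; apply Rinv_0_lt_compat; auto.
    - apply Rle_trans with (sumR U (fun z => piv G z * Ph z)).
      { apply sumR_filter_le. intros; apply Rmult_le_pos; [left; auto|auto]. }
      apply Rle_trans with (sumR U (fun z => piv G z * h z)); [apply L1_contract; auto|].
      apply Rle_trans with (sumR U (fun z => piv G z * g z)); auto.
      apply sumR_le. intros x Hx. apply Rmult_le_compat_l; [left; auto|auto]. }
  assert (HBne : B <> []).
  { intro HB0. rewrite HB0 in HsqB. change (sqw G [] h) with 0 in HsqB. lra. }
  destruct (exists_lambda G B Hp HBd HBne) as [m [Hml [Hm0 Hmf]]].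
  specialize (Hmf h). unfold Nform, Fform in Hmf. fold (sqw G B h) in Hmf.
  set (x := Rmax (2 * M) (S / s + S / t)).
  assert (Hx2 : 2 * M <= x) by apply Rmax_l.
  assert (HxM : x / M <= 4 * n * S / E * (1 + 2 * R0 / c)).
  { assert (E2 : S / s + S / t = S * S / E * (4 + 1 / th)) by (unfold s, t; field; nz).
    assert (E3 : 4 * n * S / E * (1 + 2 * R0 / c) = n * (S / E) * (4 + 1 / th)) by (unfold th; field; nz).
    rewrite E3. unfold x, Rmax. destruct (Rle_dec (2 * M) (S / s + S / t)).
    - rewrite E2. replace (S * S / E * (4 + 1 / th) / M) with (S / M * ((S / E) * (4 + 1 / th))) by (field; nz). rewrite (Rmult_assoc n).
      apply Rmult_le_compat_r. apply Rmult_le_pos. apply Rdiv_le_0_compat'; lra.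
      assert (0 < 1 / th) by (apply Rdiv_lt_0_compat; lra). lra.
      apply Rmult_le_reg_r with M; auto. unfold Rdiv. rewrite Rmult_assoc, Rinv_l, Rmult_1_r by lra. lra.
    - replace (2 * M / M) with 2 by (field; nz).
      assert (1 <= S / E). { apply Rmult_le_reg_r with E; auto. unfold Rdiv. rewrite Rmult_assoc, Rinv_l, Rmult_1_r by lra. lra. }
      assert (0 < 1 / th) by (apply Rdiv_lt_0_compat; lra). nra. }
  assert (HlnxM : ln (x / M) <= K * L0).
  { apply Rle_trans with (ln (4 * n * S / E * (1 + 2 * R0 / c))).
    { apply ln_le_mono; auto. apply Rdiv_lt_0_compat; lra. }
    rewrite ln_mult. fold L0. unfold R0. apply K_lemma; auto. lra.
    assert (0 <= 2 * R0 / c) by (apply Rdiv_le_0_compat'; lra). lra. }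
  destruct (HLam x (K * L0) Hx2 HlnxM) as [Lam [HLam1 HLam2]].
  specialize (HLam2 B m HBne HBd (Rle_trans _ _ _ HpiB (Rmax_r _ _)) Hml).
  fold R0 in HLam1.
  assert (Hm8 : 8 * th <= m). { unfold th. replace (8 * (c / (8 * R0))) with (c / R0) by (field; nz). lra. }
  rewrite Hsplit, Hin in Hmono.
  assert (Hfin : sqw G U (PU G U g) <= E - m * sqw G U h + t * S).
  { rewrite HsqB in Hmf. lra. }
  assert (t * S = th * E) by (unfold t; field; nz).
  assert (m * sqw G U h >= 8 * th * (E / 2)) by nra.
  fold th. nra.
Qed.


Lemma piv_pos {V} (G : LFGraph V) : infinite_type V -> graph_connected G -> forall v, 0 < piv G v.
Proof. intros Hinf Hc v. destruct (Hinf [v]) as [w Hw].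
  assert (Hne : v <> w) by (intro; subst; apply Hw; simpl; auto).
  pose proof (Hc v w) as H. apply clos_rt_rt1n in H. destruct H as [|y z Hy _]; [tauto|].
  unfold piv, deg. unfold adj in Hy. destruct (nbrs G v) eqn:E; [destruct Hy|]. cbn [length].
  rewrite S_INR. pose proof (pos_INR (length l)). lra. Qed.

Lemma lambda_nonneg {V} (G : LFGraph V) B l : (forall v, 0 < piv G v) -> NoDup B -> is_lambda G B l -> 0 <= l.
Proof. intros Hp HB [Hl _]. destruct (eig_rayleigh G B l Hp Hl) as [f [Hf He]].
  pose proof (Nform_nonneg G B f Hp HB). rewrite He in H.
  apply Rmult_le_reg_r with (sqw G B f); auto. lra. Qed.

Lemma SP_to_HLam {V} (G : LFGraph V) alpha c : 0 <= alpha -> 0 < c -> (forall v, 0 < piv G v) -> SP_cond G alpha c ->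
  exists M, 0 < M /\ (forall v, piv G v <= M) /\
  (forall x Y, 2 * M <= x -> ln (x / M) <= Y -> exists Lam, c / Rpower Y alpha <= Lam /\
       forall B m, B <> [] -> NoDup B -> piset G B <= x -> is_lambda G B m -> Lam <= m).
Proof.
  intros Ha Hc Hp [M [[HM1 [v0 Hv0]] HSP]].
  assert (HM : 0 < M) by (rewrite <- Hv0; auto).
  exists M. split; auto. split; auto. intros x Y Hx HY.
  set (Es := fun l => exists B : list V, B <> [] /\ NoDup B /\ piset G B <= x /\ is_lambda G B l).
  assert (Hlow : forall l, Es l -> 0 <= l).
  { intros l [B [_ [HB [_ Hl]]]]. eapply lambda_nonneg; eauto. }
  assert (Hne : exists l, Es l).
  { assert (Hd : NoDup [v0]) by (constructor; auto; constructor).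
    destruct (exists_lambda G [v0] Hp Hd ltac:(congruence)) as [m [Hm _]].
    exists m, [v0]. split; [congruence|]. split; [auto|]. split; [|auto]. unfold piset; simpl; lra. }
  destruct (completeness (fun r => Es (- r))) as [m' [Hub Hlub]].
  { exists 0. intros r Hr. apply Hlow in Hr. lra. }
  { destruct Hne as [l Hl]. exists (- l). rewrite Ropp_involutive; auto. }
  set (Lam := - m').
  assert (Hinf : is_inf Es Lam).
  { split.
    - intros r Hr. assert (Es (- - r)) by (rewrite Ropp_involutive; auto). apply Hub in H. unfold Lam; lra.
    - intros b Hb. assert (m' <= - b). { apply Hlub. intros r Hr. apply Hb in Hr. lra. } unfold Lam; lra. }
  assert (HL : is_Lambda G x Lam).
  { right. split; [exists v0; lra| exact Hinf]. }
  destruct (HSP x Lam Hx HL) as [HLpos HLb].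
  exists Lam. split.
  - assert (H2 : 2 <= x / M) by (apply Rmult_le_reg_r with M; auto; unfold Rdiv; rewrite Rmult_assoc, Rinv_l, Rmult_1_r by lra; lra).
    assert (Hln : 0 < ln (x / M)) by (apply ln_pos'; lra).
    assert (HRp : Rpower (ln (x / M)) alpha <= Rpower Y alpha) by (apply Rle_Rpower_l; auto; lra).
    pose proof (Rpower_pos Y alpha). pose proof (Rpower_pos (ln (x / M)) alpha).
    assert (/ Lam <= Rpower Y alpha / c).
    { apply Rle_trans with (/ c * Rpower (ln (x / M)) alpha); auto. replace (Rpower Y alpha / c) with (/ c * Rpower Y alpha) by (field; nz).
      apply Rmult_le_compat_l; auto. left; apply Rinv_0_lt_compat; auto. }
    apply Rmult_le_reg_r with (/ Lam). apply Rinv_0_lt_compat; auto.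
    rewrite Rinv_r by nz. 
    apply Rmult_le_compat_l with (r := c / Rpower Y alpha) in H1.
    replace (c / Rpower Y alpha * (Rpower Y alpha / c)) with 1 in H1 by (field; nz). lra.
    apply Rdiv_le_0_compat'; lra.
  - intros B m HB HBd HBx Hm. apply Hinf. exists B. auto.
Qed.


Fixpoint ball {V} (G : LFGraph V) (j : nat) (x : V) : list V :=
  match j with O => [x] | S j' => x :: flat_map (ball G j') (nbrs G x) end.

Fixpoint ball_in {V} (G : LFGraph V) (U : list V) (j : nat) (x : V) : Prop :=
  In x U /\ match j with O => True | S j' => forall w, In w (nbrs G x) -> ball_in G U j' w end.

Lemma ball_in_of_incl {V} (G : LFGraph V) U j : forall x, incl (ball G j x) U -> ball_in G U j x.
Proof. induction j; intros x H; simpl; split; auto; try (apply H; simpl; auto).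
  intros w Hw. apply IHj. intros y Hy. apply H. simpl. right. apply in_flat_map. exists w; auto. Qed.

Lemma ball_in_U {V} (G : LFGraph V) U j x : ball_in G U j x -> In x U.
Proof. destruct j; simpl; tauto. Qed.

Fixpoint uu {V} (G : LFGraph V) (U D : list V) (j : nat) : V -> R :=
  match j with O => fun x => indic (In x D) | S j' => PU G U (uu G U D j') end.

Lemma walk_eq {V} (G : LFGraph V) U D : (forall v, 0 < piv G v) -> NoDup U -> NoDup D ->
  forall j x, ball_in G U j x -> sumR D (fun v => Pk G j x v) = uu G U D j x.
Proof. intros Hp HU HD. induction j; intros x Hb; simpl.
  - destruct (classic (In x D)) as [Hx|Hx].
    + rewrite indic_true by auto.
      assert (Eq : sumR D (fun v => indic (x = v)) = sumR D (fun v => indic (x = v) * (fun _ => 1) v)).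
      { apply sumR_ext. intros v _. cbv beta. ring. }
      rewrite Eq. apply (sumR_indic_eq D x (fun _ => 1)); auto.
    + rewrite indic_false by auto. rewrite (sumR_ext D _ (fun _ => 0)). apply sumR_zero.
      intros v Hv. apply indic_false. intro; subst; tauto.
  - destruct Hb as [HxU Hb].
    rewrite sumR_swap. unfold PU.
    rewrite (sumR_ext U _ (fun w => indic (In w (nbrs G x)) * (/ piv G x * uu G U D j w))).
    2:{ intros w _. unfold Pmat, adj. pose proof (Hp x). field. nz. }
    rewrite sumR_In_conv; auto.
    + apply sumR_ext. intros w Hw. rewrite sumR_scal. rewrite IHj; auto.
    + apply nbrs_nodup.
    + intros w Hw. apply (ball_in_U G U j w). apply Hb; auto.
Qed.

Lemma uu_nonneg {V} (G : LFGraph V) U D : (forall v, 0 < piv G v) -> forall j x, 0 <= uu G U D j x.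
Proof. intros Hp j. induction j; intro x; simpl. apply indic_nonneg. apply PU_nonneg; auto. Qed.

Lemma sumR_const {T} (l : list T) a : sumR l (fun _ => a) = INR (length l) * a.
Proof. induction l; simpl; [lra|]. rewrite IHl. destruct (length l); simpl; lra. Qed.

Lemma uu0_sum {V} (G : LFGraph V) U D : NoDup U -> NoDup D -> incl D U ->
  sumR U (fun x => piv G x * uu G U D 0 x) = piset G D /\ sqw G U (uu G U D 0) = piset G D.
Proof. intros HU HD HDU. simpl. unfold piset, sqw. split.
  - rewrite <- (sumR_In_conv U D (piv G)); auto. apply sumR_ext; intros; ring.
  - rewrite <- (sumR_In_conv U D (piv G)); auto. apply sumR_ext; intros x _.
    destruct (indic_01 (In x D)) as [-> | ->]; ring. Qed.

Lemma uu_L1 {V} (G : LFGraph V) U D : (forall v, 0 < piv G v) -> NoDup U -> NoDup D -> incl D U ->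
  forall j, sumR U (fun x => piv G x * uu G U D j x) <= piset G D.
Proof. intros Hp HU HD HDU j. induction j.
  - rewrite (proj1 (uu0_sum G U D HU HD HDU)). lra.
  - simpl. eapply Rle_trans; [apply L1_contract; auto|auto]. intros; apply uu_nonneg; auto. Qed.

Lemma uu_E_decr {V} (G : LFGraph V) U D : (forall v, 0 < piv G v) -> NoDup U ->
  forall j, sqw G U (uu G U D (S j)) <= sqw G U (uu G U D j).
Proof. intros Hp HU j. simpl. pose proof (Nform_nonneg G U (uu G U D j) Hp HU). rewrite Nform_PU in H by auto. lra. Qed.

Lemma uu_E_le {V} (G : LFGraph V) U D : (forall v, 0 < piv G v) -> NoDup U -> NoDup D -> incl D U ->
  forall j, sqw G U (uu G U D j) <= piset G D.
Proof. intros Hp HU HD HDU j. induction j.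
  - rewrite (proj2 (uu0_sum G U D HU HD HDU)). lra.
  - eapply Rle_trans; [apply uu_E_decr; auto|auto]. Qed.


Lemma exp_le' a b : a <= b -> exp a <= exp b.
Proof. intros [H|H]; [left; apply exp_increasing; auto| subst; lra]. Qed.

Lemma scalar_decay (E : nat -> R) (Sm n cp alpha l : R) :
  0 <= alpha -> 0 < cp -> 0 < Sm -> 1 <= n -> ln (4 * n) <= l ->
  (forall j, 0 <= E j <= Sm) -> (forall j, E (S j) <= E j) ->
  (forall j, 0 < E j -> E (S j) <= E j * exp (- (cp / Rpower (ln (4 * n * Sm / E j)) alpha))) ->
  forall j, E j <= Sm * exp (- Rmin l (INR j * (cp / Rpower (2 * l) alpha))).
Proof.
  intros Ha Hcp HS Hn Hl HE Hdec Hstep.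
  assert (Hl0 : 1 <= l) by (eapply Rle_trans; [|exact Hl]; apply ln_ge1_4; lra).
  set (d := cp / Rpower (2 * l) alpha).
  assert (Hd : 0 < d) by (apply Rdiv_lt_0_compat; auto; apply Rpower_pos).
  induction j.
  - simpl. rewrite Rmult_0_l. rewrite Rmin_right by lra. rewrite Ropp_0, exp_0. specialize (HE 0%nat). lra.
  - rewrite S_INR. destruct (Rle_dec (E j) (Sm * exp (- l))) as [Hsm|Hbig].
    + eapply Rle_trans; [apply Hdec|]. eapply Rle_trans; [exact Hsm|].
      apply Rmult_le_compat_l; [lra|]. apply exp_le'. pose proof (Rmin_l l ((INR j + 1) * d)). lra.
    + assert (HEj : 0 < E j) by (pose proof (exp_pos (- l)); nra).
      specialize (HE j). 
      set (X := 4 * n * Sm / E j).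
      assert (HX : 4 <= X). { unfold X. apply Rmult_le_reg_r with (E j); auto. unfold Rdiv.
        rewrite Rmult_assoc, Rinv_l, Rmult_1_r by nz. nra. }
      assert (HlnX : 0 < ln X) by (apply ln_pos'; lra).
      assert (HlnX2 : ln X <= 2 * l).
      { unfold X. replace (4 * n * Sm / E j) with (4 * n * (Sm / E j)) by (field; nz).
        rewrite ln_mult by (try apply Rdiv_lt_0_compat; lra).
        assert (ln (Sm / E j) < l).
        { rewrite <- (ln_exp l). apply ln_increasing. apply Rdiv_lt_0_compat; lra.
          apply Rmult_lt_reg_r with (E j); auto. unfold Rdiv. rewrite Rmult_assoc, Rinv_l, Rmult_1_r by nz.
          assert (Sm * exp (- l) < E j) by lra. rewrite exp_Ropp in H.
          apply Rmult_lt_compat_r with (r := exp l) in H; [|apply exp_pos].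
          rewrite Rmult_assoc, Rinv_l, Rmult_1_r in H by (pose proof (exp_pos l); nz). lra. }
        lra. }
      assert (Hdl : d <= cp / Rpower (ln X) alpha).
      { unfold d. unfold Rdiv. apply Rmult_le_compat_l; [lra|]. apply Rinv_le_contravar. apply Rpower_pos.
        apply Rle_Rpower_l; auto. }
      eapply Rle_trans; [apply Hstep; auto|]. fold X.
      apply Rle_trans with (E j * exp (- d)).
      { apply Rmult_le_compat_l; [lra|]. apply exp_le'. lra. }
      apply Rle_trans with (Sm * exp (- Rmin l (INR j * d)) * exp (- d)).
      { apply Rmult_le_compat_r; [left; apply exp_pos|auto]. }
      rewrite Rmult_assoc, <- exp_plus. apply Rmult_le_compat_l; [lra|]. apply exp_le'.
      unfold Rmin. destruct (Rle_dec l (INR j * d)); destruct (Rle_dec l ((INR j + 1) * d)); nra.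
Qed.


Lemma Rpower_lt_base x y a : 0 < x -> x < y -> 0 < a -> Rpower x a < Rpower y a.
Proof. intros. unfold Rpower. apply exp_increasing. apply Rmult_lt_compat_l; auto. apply ln_increasing; auto. Qed.

Lemma le_div_iff a b c : 0 < c -> (a <= b / c <-> a * c <= b).
Proof. intro Hc. split; intro H.
  - apply Rmult_le_compat_r with (r := c) in H; [|lra]. unfold Rdiv in H. rewrite Rmult_assoc, Rinv_l, Rmult_1_r in H by nz. auto.
  - apply Rmult_le_reg_r with c; auto. unfold Rdiv. rewrite Rmult_assoc, Rinv_l, Rmult_1_r by nz. auto. Qed.

Lemma rate_bound (alpha cp : R) (n k : nat) : 0 <= alpha -> 0 < cp -> (1 <= n)%nat ->
  Rmin 1 (cp / Rpower 2 alpha) / Rpower 3 alpha * rate alpha n k <=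
  Rmin (Rmax (ln (4 * INR n)) (kpow k (/ (1 + alpha))))
       (INR k * (cp / Rpower (2 * Rmax (ln (4 * INR n)) (kpow k (/ (1 + alpha)))) alpha)).
Proof.
  intros Ha Hcp Hn.
  assert (HnR : 1 <= INR n) by (apply (le_INR 1); auto).
  set (a := ln (4 * INR n)).
  assert (Ha1 : 1 <= a) by (apply ln_ge1_4; lra).
  set (P2 := Rpower 2 alpha). set (P3 := Rpower 3 alpha).
  assert (HP2 : 1 <= P2) by (apply Rpower_ge1; lra).
  assert (HP3 : 1 <= P3) by (apply Rpower_ge1; lra).
  set (c0 := Rmin 1 (cp / P2)).
  assert (Hc0 : 0 < c0) by (apply Rmin_pos; [lra| apply Rdiv_lt_0_compat; lra]).
  assert (Hc01 : c0 <= 1) by apply Rmin_l.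
  assert (Hc02 : c0 <= cp / P2) by apply Rmin_r.
  destruct k as [|k'].
  - assert (Hk0 : kpow 0 (/ (1 + alpha)) = 0) by reflexivity.
    unfold rate. rewrite Hk0. simpl INR. replace (0 / Rpower (ln (INR n)) alpha) with 0 by (unfold Rdiv; ring).
    rewrite Rmult_0_l. pose proof (Rmax_l a 0).
    assert (HR : Rmin (Rmax a 0) 0 = 0) by (apply Rmin_right; lra). rewrite HR.
    destruct (Nat.eq_dec n 1). { rewrite Rmult_0_r; lra. } rewrite Rmin_left by lra. rewrite Rmult_0_r; lra.
  - set (k := S k') in *. set (b := / (1 + alpha)).
    assert (Hk1 : 1 <= INR k) by (apply (le_INR 1); unfold k; lia).
    assert (Hkap : kpow k b = Rpower (INR k) b) by reflexivity.
    set (kap := kpow k b) in *.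
    assert (Hb : 0 < b) by (apply Rinv_0_lt_compat; lra).
    assert (Hkap1 : 1 <= kap) by (rewrite Hkap; apply Rpower_ge1; lra).
    assert (HkA : kap * Rpower kap alpha = INR k).
    { rewrite <- (Rpower_1 kap) at 1 by lra. rewrite <- Rpower_plus. rewrite Hkap, Rpower_mult.
      replace (b * (1 + alpha)) with 1 by (unfold b; field; nz). apply Rpower_1; lra. }
    assert (Hkapk : kap <= INR k). { rewrite <- HkA. assert (1 <= Rpower kap alpha) by (apply Rpower_ge1; lra). nra. }
    assert (Hrate0 : 0 <= rate alpha n k).
    { unfold rate. fold b. fold kap. destruct (Nat.eq_dec n 1); [lra|].
      apply Rmin_glb; [|lra]. apply Rdiv_le_0_compat'; [lra| apply Rpower_pos]. }
    assert (Hratek : rate alpha n k <= kap).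
    { unfold rate. fold b. fold kap. destruct (Nat.eq_dec n 1); [lra| apply Rmin_r]. }
    assert (HP2l : forall l, 0 < l -> Rpower (2 * l) alpha = P2 * Rpower l alpha).
    { intros l Hl. unfold P2. rewrite Rpower_mult_distr; auto; lra. }
    destruct (Rle_dec a kap) as [Hak|Hak].
    + rewrite Rmax_right by auto. rewrite HP2l by lra.
      assert (E1 : INR k * (cp / (P2 * Rpower kap alpha)) = kap * (cp / P2)).
      { rewrite <- HkA. pose proof (Rpower_pos kap alpha). field. nz. }
      rewrite E1. apply Rle_trans with (c0 * kap).
      { apply Rle_trans with (c0 / P3 * kap). apply Rmult_le_compat_l; auto. apply Rdiv_le_0_compat'; lra.
        apply Rmult_le_compat_r; [lra|]. unfold Rdiv. assert (/ P3 <= 1) by (rewrite <- Rinv_1; apply Rinv_le_contravar; lra). assert (0 < / P3) by (apply Rinv_0_lt_compat; lra). nra. }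
      apply Rmin_glb; nra.
    + rewrite Rmax_left by lra. rewrite HP2l by lra.
      set (A := Rpower a alpha).
      assert (HA1 : 1 <= A) by (apply Rpower_ge1; lra).
      assert (HkaA : INR k < a * A).
      { rewrite <- HkA. assert (Rpower kap alpha <= A) by (apply Rle_Rpower_l; lra).
        assert (0 < Rpower kap alpha) by apply Rpower_pos. nra. }
      assert (Hmid : c0 * (INR k / A) <= Rmin a (INR k * (cp / (P2 * A)))).
      { apply Rmin_glb.
        - assert (INR k / A < a) by (apply Rmult_lt_reg_r with A; [lra|]; unfold Rdiv; rewrite Rmult_assoc, Rinv_l, Rmult_1_r by nz; lra).
          assert (0 <= INR k / A) by (apply Rdiv_le_0_compat'; lra). nra.
        - replace (INR k * (cp / (P2 * A))) with ((cp / P2) * (INR k / A)) by (field; nz).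
          apply Rmult_le_compat_r; auto. apply Rdiv_le_0_compat'; lra. }
      eapply Rle_trans; [|exact Hmid].
      replace (c0 / P3 * rate alpha n k) with (c0 * (rate alpha n k / P3)) by (field; nz).
      apply Rmult_le_compat_l; [lra|].
      unfold rate. fold b. fold kap. destruct (Nat.eq_dec n 1) as [Hn1|Hn1].
      * subst n. assert (HA3 : A <= P3).
        { unfold A, P3. apply Rle_Rpower_l; auto. split; [lra|]. unfold a. simpl INR.
          pose proof (ln_le_sub1 (4 * 1)). lra. }
        apply Rle_trans with (INR k / P3). unfold Rdiv; apply Rmult_le_compat_r; [left; apply Rinv_0_lt_compat; lra| auto].
        unfold Rdiv. apply Rmult_le_compat_l; [lra|]. apply Rinv_le_contravar; lra.
      * assert (Hn2 : 2 <= INR n). { apply (le_INR 2). lia. }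
        set (Ln := ln (INR n)).
        assert (HLn : 0 < Ln) by (apply ln_pos'; lra).
        assert (Ha3 : a <= 3 * Ln).
        { unfold a, Ln. replace (3 * ln (INR n)) with (ln (INR n * INR n * INR n)).
          apply ln_le_mono; nra. rewrite !ln_mult by nra. ring. }
        assert (HAle : A <= P3 * Rpower Ln alpha).
        { unfold A, P3. rewrite Rpower_mult_distr by lra. apply Rle_Rpower_l; auto; lra. }
        apply Rle_trans with ((INR k / Rpower Ln alpha) / P3).
        { unfold Rdiv at 1. apply Rmult_le_compat_r; [left; apply Rinv_0_lt_compat; lra| apply Rmin_l]. }
        replace (INR k / Rpower Ln alpha / P3) with (INR k / (P3 * Rpower Ln alpha)) by (pose proof (Rpower_pos Ln alpha); field; nz).
        unfold Rdiv. apply Rmult_le_compat_l; [lra|]. apply Rinv_le_contravar; auto. lra.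
Qed.


Lemma fold_Rmax_ge (l : list R) y : In y l -> y <= fold_right Rmax 0 l.
Proof. induction l; simpl; [tauto|]. intros [<-|H]. apply Rmax_l. eapply Rle_trans; [apply IHl; auto| apply Rmax_r]. Qed.

Lemma max_ratio_ge {V} (G : LFGraph V) D u v : In u D -> In v D -> piv G u / piv G v <= max_ratio G D.
Proof. intros Hu Hv. unfold max_ratio. apply fold_Rmax_ge.
  change (piv G u / piv G v) with ((fun p => piv G (fst p) / piv G (snd p)) (u, v)). apply in_map. apply in_prod; auto. Qed.

Lemma ball_self {V} (G : LFGraph V) j x : In x (ball G j x).
Proof. destruct j; simpl; auto. Qed.

Theorem main_thm :
  forall alpha c : R, 0 <= alpha -> 0 < c ->
  exists c1 : R, 0 < c1 /\
    forall (V : Type) (G : LFGraph V),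
      infinite_type V -> graph_connected G -> SP_cond G alpha c ->
      forall (D : list V) (k : nat), D <> nil -> NoDup D ->
        prob_return G D k <=
        sqrt (max_ratio G D) * exp (- c1 * rate alpha (length D) k).
Proof.
  intros alpha c Ha Hc.
  pose proof (Kc_ge alpha c Ha Hc) as HK.
  set (K := Kc alpha c) in *.
  set (cp := 3 * c / (8 * Rpower K alpha)).
  assert (Hcp : 0 < cp) by (apply Rdiv_lt_0_compat; [lra| pose proof (Rpower_pos K alpha); lra]).
  set (c0 := Rmin 1 (cp / Rpower 2 alpha)).
  assert (Hc0 : 0 < c0) by (apply Rmin_pos; [lra| apply Rdiv_lt_0_compat; [lra| apply Rpower_pos]]).
  set (c1 := c0 / Rpower 3 alpha / 2).
  assert (Hc1 : 0 < c1) by (apply Rdiv_lt_0_compat; [apply Rdiv_lt_0_compat; [lra| apply Rpower_pos]| lra]).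
  exists c1. split; auto.
  intros V G Hinf Hconn HSP D k HD HDn.
  pose proof (piv_pos G Hinf Hconn) as Hp.
  destruct (SP_to_HLam G alpha c Ha Hc Hp HSP) as [M [HM [HpM HLam]]].
  set (nR := INR (length D)).
  assert (HnR : 1 <= nR). { unfold nR. destruct D; [congruence|]. simpl length. rewrite S_INR. pose proof (pos_INR (length D)). lra. }
  set (S0 := piset G D).
  assert (HS0 : 0 < S0). { unfold S0, piset. destruct D as [|d0 D']; [congruence|]. apply sumR_pos_one with d0; simpl; auto.
     intros; left; auto. }
  assert (HS0n : S0 <= nR * M). { unfold S0, piset, nR. rewrite <- sumR_const. apply sumR_le; auto. }
  set (U := nodup edec (flat_map (ball G k) D)).
  assert (HU : NoDup U) by apply NoDup_nodup.
  assert (HinU : forall u x, In u D -> In x (ball G k u) -> In x U).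
  { intros u x Hu Hx. apply nodup_In. apply in_flat_map. exists u; auto. }
  assert (HDU : incl D U) by (intros u Hu; apply (HinU u u Hu (ball_self G k u))).
  assert (Hball : forall u, In u D -> ball_in G U k u) by (intros u Hu; apply ball_in_of_incl; intros x Hx; eauto).
  set (E := fun j => sqw G U (uu G U D j)).
  set (l := Rmax (ln (4 * INR (length D))) (kpow k (/ (1 + alpha)))).
  assert (Hdecay : E k <= S0 * exp (- Rmin l (INR k * (cp / Rpower (2 * l) alpha)))).
  { apply (scalar_decay E S0 nR cp alpha l); auto.
    - apply Rmax_l.
    - intro j. split. apply sqw_nonneg; auto. apply uu_E_le; auto.
    - intro j. apply uu_E_decr; auto.
    - intros j Hj. unfold E in *. simpl uu.
      assert (HEle : sqw G U (uu G U D j) <= S0) by (apply uu_E_le; auto).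
      pose proof (step_decay G U alpha c M S0 nR (uu G U D j) Ha Hc Hp HU HM HpM HLam
                   (fun x _ => uu_nonneg G U D Hp j x) (uu_L1 G U D Hp HU HDn HDU j) HnR HS0n Hj HEle) as Hst.
      fold K in Hst.
      set (Ej := sqw G U (uu G U D j)) in *.
      set (L0 := ln (4 * nR * S0 / Ej)) in *.
      assert (HL0 : 1 <= L0).
      { apply ln_ge1_4. apply le_div_iff; [lra|]. assert (0 <= (nR - 1) * S0) by (apply Rmult_le_pos; lra). nra. }
      rewrite <- Rpower_mult_distr in Hst by lra.
      eapply Rle_trans; [exact Hst|]. apply Rmult_le_compat_l; [lra|].
      replace (3 * (c / (8 * (Rpower K alpha * Rpower L0 alpha)))) with (cp / Rpower L0 alpha).
      2:{ unfold cp. pose proof (Rpower_pos K alpha). pose proof (Rpower_pos L0 alpha). field. nz. }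
      pose proof (exp_ineq1_le (- (cp / Rpower L0 alpha))). lra. }
  pose proof (rate_bound alpha cp (length D) k Ha Hcp) as Hrb.
  fold l in Hrb. fold c0 in Hrb.
  assert (Hlen : (1 <= length D)%nat) by (destruct D; [congruence| simpl; lia]).
  specialize (Hrb Hlen).
  set (r := rate alpha (length D) k) in *.
  assert (HEk : E k <= S0 * exp (- (2 * c1) * r)).
  { eapply Rle_trans; [exact Hdecay|]. apply Rmult_le_compat_l; [lra|]. apply exp_le'.
    pose proof (Rpower_pos 3 alpha). replace (- (2 * c1) * r) with (- (c0 / Rpower 3 alpha * r)) by (unfold c1; field; nz). lra. }
  unfold prob_return.
  rewrite (sumR_ext D _ (fun u => uu G U D k u)).
  2:{ intros u Hu. apply walk_eq; auto. }
  set (T := sumR D (fun u => uu G U D k u)).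
  assert (HT : 0 <= T) by (apply sumR_nonneg; intros; apply uu_nonneg; auto).
  set (Hs := sumR D (fun u => / piv G u)).
  set (E' := sumR D (fun u => piv G u * uu G U D k u ^ 2)).
  assert (HCS : T ^ 2 <= Hs * E').
  { pose proof (cauchy_schwarz D (fun u => / sqrt (piv G u)) (fun u => sqrt (piv G u) * uu G U D k u)) as H.
    unfold T, Hs, E'.
    replace (sumR D (fun u => uu G U D k u)) with (sumR D (fun x => / sqrt (piv G x) * (sqrt (piv G x) * uu G U D k x))).
    replace (sumR D (fun u => / piv G u)) with (sumR D (fun x => (/ sqrt (piv G x)) ^ 2)).
    replace (sumR D (fun u => piv G u * uu G U D k u ^ 2)) with (sumR D (fun x => (sqrt (piv G x) * uu G U D k x) ^ 2)).
    exact H.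
    all: apply sumR_ext; intros x _; pose proof (Hp x); pose proof (sqrt_lt_R0 _ (Hp x));
         pose proof (sqrt_sqrt (piv G x) ltac:(lra)).
    - rewrite Rpow_mult_distr. simpl. rewrite Rmult_1_r. rewrite H2. ring.
    - rewrite pow_inv. simpl. rewrite Rmult_1_r, H2. reflexivity.
    - field. nz. }
  assert (HE'E : E' <= E k).
  { unfold E', E, sqw. apply sumR_subset_le; auto. intros; apply Rmult_le_pos; [left; auto| apply pow2_ge_0]. }
  set (mr := max_ratio G D).
  assert (Hmr : 0 <= mr).
  { destruct D as [|d0 D']; [congruence|]. eapply Rle_trans; [|apply (max_ratio_ge G (d0 :: D') d0 d0); simpl; auto].
    apply Rdiv_le_0_compat'; [left; auto| auto]. }
  assert (HHS : Hs * S0 <= nR * nR * mr).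
  { unfold Hs, S0, piset. rewrite <- sumR_scalr.
    apply Rle_trans with (sumR D (fun u => sumR D (fun v => mr))).
    - apply sumR_le. intros u Hu. rewrite <- sumR_scal. apply sumR_le. intros v Hv.
      pose proof (max_ratio_ge G D v u Hv Hu). fold mr in H. unfold Rdiv in H. lra.
    - rewrite (sumR_ext D _ (fun _ => nR * mr)) by (intros; unfold nR; apply sumR_const).
      rewrite sumR_const. fold nR. lra. }
  assert (HHs : 0 <= Hs) by (apply sumR_nonneg; intros; left; apply Rinv_0_lt_compat; auto).
  set (X := exp (- c1 * r)).
  assert (HX2 : exp (- (2 * c1) * r) = X * X) by (unfold X; rewrite <- exp_plus; f_equal; ring).
  assert (HT2 : T * T <= (nR * sqrt mr * X) * (nR * sqrt mr * X)).
  { replace ((nR * sqrt mr * X) * (nR * sqrt mr * X)) with (nR * nR * (sqrt mr * sqrt mr) * (X * X)) by ring.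
    rewrite sqrt_sqrt by auto. rewrite <- HX2.
    apply Rle_trans with (Hs * E'). simpl in HCS. lra.
    apply Rle_trans with (Hs * (S0 * exp (- (2 * c1) * r))).
    { apply Rmult_le_compat_l; auto. lra. }
    rewrite <- Rmult_assoc. apply Rmult_le_compat_r; [left; apply exp_pos| auto]. }
  assert (HTb : T <= nR * sqrt mr * X).
  { assert (0 <= nR * sqrt mr * X). { apply Rmult_le_pos; [apply Rmult_le_pos; [lra| apply sqrt_pos]| left; apply exp_pos]. }
    destruct (Rle_dec T (nR * sqrt mr * X)); auto. nra. }
  fold nR. apply Rle_trans with (/ nR * (nR * sqrt mr * X)).
  { apply Rmult_le_compat_l; auto. left; apply Rinv_0_lt_compat; lra. }
  right. field. nz.
Qed.


Theorem proposition3p4 :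
  forall alpha c : R, 0 <= alpha -> 0 < c ->
  exists c1 : R, 0 < c1 /\
    forall (V : Type) (G : LFGraph V),
      infinite_type V -> graph_connected G -> SP_cond G alpha c ->
      forall (D : list V) (k : nat), D <> nil -> NoDup D ->
        prob_return G D k <=
        sqrt (max_ratio G D) * exp (- c1 * rate alpha (length D) k).
Proof. exact main_thm. Qed.
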